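(* Let $X$ be a Tychonoff Hausdorff $P$-space, $Y$ a Tychonoff space, $f:X\to Y$ a nearly perfect mapping, and $A\subseteq X$. Then $f|_A:A\to f(A)$ is a nearly perfect mapping onto $f(A)$ if and only if $A=f^{-1}(f(A))\cap\overline{A}$.
   Context: A space $X$ is Menger if for each sequence $(\mathcal{U}_n)$ of open covers of $X$ there is a sequence $(\mathcal{V}_n)$ with each $\mathcal{V}_n$ a finite subset of $\mathcal{U}_n$ and $\bigcup_{n}\bigcup\mathcal{V}_n=X$. A $P$-space is a space in which every countable intersection of open sets is open. A mapping $f:X\to Y$ is nearly perfect if it is a closed continuous surjection such that $f^{-1}(y)$ is Menger for every $y\in Y$. *)

(* Defs.v *)
From HB Require Import structures.
From mathcomp Require Import all_boot all_algebra.
From mathcomp Require Import all_classical all_reals all_analysis.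
Set Implicit Arguments. Unset Strict Implicit. Unset Printing Implicit Defensive.
Local Open Scope classical_set_scope.

(* Subspaces are the sigma types [set_type A]
   (coercion from [set X]) with the initial (subspace) topology of
   subtype_topology.v. *)

Definition tychonoff_space (T : topologicalType) : Prop :=
  completely_regular_space T /\ hausdorff_space T.

Definition P_space (T : topologicalType) : Prop :=
  forall F : nat -> set T, (forall n, open (F n)) -> open (\bigcap_n F n).

Definition Menger (T : topologicalType) : Prop :=
  forall U : nat -> set (set T),
    (forall n, (forall W, U n W -> open W) /\ [set: T] `<=` \bigcup_(W in U n) W) ->
    exists V : nat -> set (set T),
      (forall n, V n `<=` U n /\ finite_set (V n)) /\
      [set: T] `<=` \bigcup_n \bigcup_(W in V n) W.

Definition closed_map (X Y : topologicalType) (f : X -> Y) : Prop :=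
  forall C : set X, closed C -> closed (f @` C).

Definition nearly_perfect (X Y : topologicalType) (f : X -> Y) : Prop :=
  [/\ continuous f, closed_map f, (forall y, exists x, f x = y) &
      forall y : Y, Menger (f @^-1` [set y])].

Definition restr (X Y : Type) (f : X -> Y) (A : set X) : A -> (f @` A) :=
  fun a => exist _ (f (val a)) (mem_set (imageP f (set_valP a))).
Arguments restr {X Y} f A.

(* Main.v *)
Require Import Defs.
From HB Require Import structures.
From mathcomp Require Import all_boot all_algebra.
From mathcomp Require Import all_classical all_reals all_analysis.
Local Open Scope classical_set_scope.
Lemma dir1 (X Y : topologicalType) (f : X -> Y) (A : set X) :
  hausdorff_space X -> P_space X -> continuous f -> nearly_perfect (restr f A) ->
  f @^-1` (f @` A) `&` closure A `<=` A.
Proof.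
move=> hX PX cf [_ cl _ Men] x [[a0 Aa0 fa0x] clx].
case: (pselect (A x)) => // nAx; exfalso.
pose a0' : A := exist _ a0 (mem_set Aa0).
pose y' := restr f A a0'.
pose T := restr f A @^-1` [set y'].
pose U0 : set (set T) := [set W | exists Ob : set X,
  [/\ open Ob, ~ closure Ob x & W = [set t : T | Ob (val (val t))]]].
have [|V [VU cov]] := Men y' (fun _ => U0).
  move=> n; split.
    move=> W [Ob [oO _ ->]].
    exists (set_val @^-1` Ob : set A) => //; by exists Ob.
  move=> t _.
  pose p := val (val t).
  have Ap : A p.
  { rewrite /p; case: (val t) => z /= /set_mem; done. }
  have [Ob [oO Op nclO]] : exists Ob, [/\ open Ob, Ob p & ~ closure Ob x].
    apply: contrapT => H; apply: nAx.
    have px : p = x.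
      apply: hX => B C nB nC.
      have : closure (B°) x.
        apply: contrapT => ncl; apply: H; exists B°; split => //.
          exact: open_interior.
        
      move=> /(_ C nC) [z [Bz Cz]]; exists z; split => //; exact: interior_subset.
    by rewrite -px.
  exists [set t : T | Ob (val (val t))] => //; by exists Ob.
have HC : forall W : set T, exists Ob : set X, U0 W ->
    [/\ open Ob, ~ closure Ob x & W = [set t : T | Ob (val (val t))]].
  move=> W; case: (pselect (U0 W)) => [[Ob HOb]|nW].
    by exists Ob.
  by exists set0.
have [Of HOf] := choice HC.
pose G := \bigcap_n ~` \bigcup_(W in V n) closure (Of W).
have oG : open G.
  apply: PX => n; rewrite openC; apply: closed_bigcup.
    exact: (VU n).2.
  move=> W _; exact: closed_closure.
have Gx : G x.
  move=> n _ [W VW clW].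
  by have [_ + _] := HOf W ((VU n).1 _ VW).
pose D' : set A := [set a | closure G (val a)].
have clD' : closed D'.
  apply: (@preimage_closed _ _ set_val (closure G)); last exact: closed_closure.
  move=> z _; exact: initial_continuous.
have clS := cl _ clD'.
have [a Da ra] : (restr f A @` D') y'.
  apply: contrapT => ny.
  have : open (~` (restr f A @` D')) by rewrite openC.
  case=> Ob oO eqO.
  have Oy : Ob (f x).
    have : (~` (restr f A @` D')) y' by [].
    by rewrite -eqO /= -fa0x.
  have nO : nbhs x (f @^-1` Ob) by apply: cf; apply: open_nbhs_nbhs; split.
  have nG : nbhs x G by apply: open_nbhs_nbhs; split.
  have [z [Az [Oz Gz]]] := clx _ (filterI nO nG).
  pose zA : A := exist _ z (mem_set Az).
  have h1 : (restr f A @` D') (restr f A zA).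
    by exists zA => //; apply: subset_closure.
  have : (~` (restr f A @` D')) (restr f A zA) by rewrite -eqO.
  by [].
pose t : T := exist _ a (mem_set ra).
have [n _ [W VW Wt]] := cov t I.
have [oO _ eqW] := HOf W ((VU n).1 _ VW).
have Oa : Of W (val a) by move: Wt; rewrite {1}eqW.
have [z [Gz Oz]] := Da _ (open_nbhs_nbhs (conj oO Oa)).
apply: (Gz n I); exists W => //; exact: subset_closure.
Qed.
Lemma dir2 (X Y : topologicalType) (f : X -> Y) (A : set X) :
  nearly_perfect f -> A = f @^-1` (f @` A) `&` closure A ->
  nearly_perfect (restr f A).
Proof.
move=> [cf clf surj Men] eqA.
have inA : forall z, (f @` A) (f z) -> closure A z -> A z.
  by move=> z h1 h2; rewrite eqA.
split.
- apply: continuous_comp_initial => a.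
  apply: (@continuous_comp _ _ _ set_val f); first exact: initial_continuous.
  exact: cf.
- move=> C clC.
  have : open (~` C) by rewrite openC.
  case=> Ob oO eqO.
  rewrite -openC.
  exists (~` (f @` (closure A `&` ~` Ob))).
    rewrite openC; apply: clf; apply: closedI; first exact: closed_closure.
    by rewrite closedC.
  apply/seteqP; split => b /=.
    move=> nb [c Cc cb]; apply: nb; exists (val c); last by rewrite -cb.
    split.
      apply: subset_closure; case: c {Cc cb} => z /= /set_mem //.
    move=> Oc.
    have : (~` C) c by rewrite -eqO.
    by [].
  move=> nb [z [clz nOz] fzb]; apply: nb.
  have Az : A z.
    apply: inA => //; rewrite fzb; case: b {fzb} => w /= /set_mem //.
  exists (exist _ z (mem_set Az)).
    apply: contrapT => nC.
    have : (~` C) (exist _ z (mem_set Az)) by [].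
    by rewrite -eqO.
  by apply: val_inj.
- move=> b; have [a Aa fab] : (f @` A) (val b) by case: b => w /= /set_mem.
  exists (exist _ a (mem_set Aa)); exact: val_inj.
move=> y' U hU.
pose y := val y'.
pose T := restr f A @^-1` [set y'].
pose M := f @^-1` [set y].
have embP : forall t : T, (val (val t)) \in M.
  move=> [[z Az] /= /set_mem rt]; apply: mem_set; rewrite /M /=.
  by rewrite /y -rt.
pose emb : T -> M := fun t => exist _ (val (val t)) (embP t).
pose phi : set M -> set T := fun S => emb @^-1` S.
pose U' : nat -> set (set M) := fun n => [set S | (exists Ob : set X,
   [/\ open Ob, U n [set t : T | Ob (val (val t))] & S = set_val @^-1` Ob])
   \/ S = set_val @^-1` (~` closure A)].
have [|V' [V'U cov]] := Men y U'.
  move=> n; split.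
    move=> S [[Ob [oO _ ->]]|->].
      by exists Ob.
    by exists (~` closure A) => //; rewrite openC; exact: closed_closure.
  move=> z _; case: (pselect (closure A (val z))) => [clz|nclz]; last first.
    by exists (set_val @^-1` (~` closure A)) => //; right.
  have fz : f (val z) = y by case: z {clz} => w /= /set_mem.
  have Az : A (val z).
    apply: inA => //; rewrite fz /y; exact: set_mem (proj2_sig y').
  pose zA : A := exist _ (val z) (mem_set Az).
  have rz : restr f A zA = y' by apply: val_inj.
  pose t : T := exist _ zA (mem_set rz).
  have [W UW Wt] := (hU n).2 t I.
  have [Ob1 [Ob oO eq1] eqW] := (hU n).1 W UW.
  exists (set_val @^-1` Ob).
    left; exists Ob; split => //.
    suff -> : [set t : T | Ob (val (val t))] = W by [].
    by rewrite -eqW -eq1.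
  have : W t by [].
  by rewrite -eqW -eq1.
exists (fun n => U n `&` (phi @` V' n)); split.
  move=> n; split; first by move=> W [].
  apply: (@sub_finite_set _ _ (phi @` V' n)); first by move=> W [].
  apply: finite_image; exact: (V'U n).2.
move=> t _.
have [n _ [S VS St]] := cov (emb t) I.
have [[Ob [oO UO eqS]]|eqS] := (V'U n).1 _ VS.
  exists n => //; exists (phi S) => //; split; last by exists S.
  by rewrite /phi eqS.
exfalso; move: St; rewrite eqS /=; apply.
apply: subset_closure; case: t => -[w /= /set_mem] //.
Qed.

Theorem theorem5p21 (X Y : topologicalType) (f : X -> Y) (A : set X) :
  tychonoff_space X -> hausdorff_space X -> P_space X ->
  tychonoff_space Y -> nearly_perfect f ->
  (nearly_perfect (restr f A) <-> A = f @^-1` (f @` A) `&` closure A).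
Proof.
move=> _ hX PX _ npf; split.
  move=> npr; apply/seteqP; split.
    move=> a Aa; split; first by exists a.
    exact: subset_closure.
  have [cf _ _ _] := npf.
  exact: dir1.
exact: dir2.
Qed.
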